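(* Let $N$ be a finite set, $r\notin N$, $V=N\cup\{r\}$, and let $G=(V,E)$ be the complete graph on $V$ with edge weights $w:E\to\mathbb{R}$ taking the distinct values $w_1<\dots<w_k$. Then the graphs $G_i$, $i<k$, contain no bad holes and no bad induced diamonds if and only if the graphs $G_i$, $i<k$, contain no violated cycles.
   Context: $E_i=\{e\in E:w(e)\le w_i\}$, $G_i=(V,E_i)$. A hole is an induced cycle with at least four vertices; a hole in $G_i$ is bad if it contains a vertex $x\neq r$ with $rx\notin E_i$. A diamond is $K_4$ minus one edge; its tips are its two vertices of degree 2. For a cycle $C$ and a chord $f=xy$ of $C$, with $P_1,P_2$ the two $x$-$y$ paths of $C$, $f$ covers $C$ if $w(f)\ge w(e)$ for all $e\in E(P_1)$ or for all $e\in E(P_2)$; $C$ is well-covered if covered by all its chords (chords taken in the graph $G_i$ under consideration). An induced diamond in $G_i$ is bad if its Hamiltonian cycle is well-covered and at least one tip $x\ne r$ satisfies $rx\notin E_i$. A violated cycle in $G_i$ is a well-covered cycle of $G_i$ that contains two vertices non-adjacent in $G_i$ and contains a vertex $x\ne r$ with $rx\notin E_i$. *)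

(* Defs.v *)
From HB Require Import structures.
From mathcomp Require Import all_boot all_order all_algebra.
Set Implicit Arguments. Unset Strict Implicit. Unset Printing Implicit Defensive.
Import Order.TTheory GRing.Theory Num.Theory.
Local Open Scope ring_scope.

(* Complete graph on a finite vertex type V (V = N ∪ {r}); an edge is a pair
   x y with x != y; weight w x y (assumed symmetric). *)

Section Graph.
Variables (R : realDomainType) (V : finType) (w : V -> V -> R).

Definition adj (t : R) (x y : V) : bool := (x != y) && (w x y <= t).

(* t is one of the values w_1 < ... < w_{k-1}, i.e. a weight value w_i, i < k *)
Definition threshold (t : R) : Prop :=
  (exists x y, x != y /\ w x y = t) /\ (exists x y, x != y /\ t < w x y).

Definition is_cycle (t : R) (c : seq V) : Prop :=
  [/\ uniq c, 3 <= size c & cycle (adj t) c]%N.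

Definition cv (x0 : V) (c : seq V) (i : nat) : V := nth x0 c i.

Definition nonconsec (n i j : nat) : bool :=
  [&& i < j, j < n, j != i.+1 & ~~ ((i == 0) && (j == n.-1))]%N.

Definition cedge (x0 : V) (c : seq V) (k : nat) : R :=
  w (cv x0 c k) (cv x0 c (k.+1 %% size c)).

Definition covers (x0 : V) (c : seq V) (i j : nat) : Prop :=
  (forall k, (i <= k < j)%N -> cedge x0 c k <= w (cv x0 c i) (cv x0 c j)) \/
  (forall k, (k < size c)%N -> (k < i)%N || (j <= k)%N ->
     cedge x0 c k <= w (cv x0 c i) (cv x0 c j)).

Definition well_covered (t : R) (c : seq V) : Prop :=
  forall x0 i j, nonconsec (size c) i j -> adj t (cv x0 c i) (cv x0 c j) ->
    covers x0 c i j.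

Definition has_far_vertex (r : V) (t : R) (c : seq V) : Prop :=
  exists2 x, x \in c & (x != r) && ~~ adj t r x.

Definition bad_hole (r : V) (t : R) (c : seq V) : Prop :=
  [/\ is_cycle t c, (4 <= size c)%N,
      (forall x0 i j, nonconsec (size c) i j -> ~~ adj t (cv x0 c i) (cv x0 c j))
    & has_far_vertex r t c].

(* induced diamond with tips x y (non-adjacent) and degree-3 vertices u v;
   its Hamiltonian cycle is x u y v *)
Definition bad_diamond (r : V) (t : R) (x u y v : V) : Prop :=
  [/\ uniq [:: x; u; y; v],
      [&& adj t x u, adj t x v, adj t y u, adj t y v, adj t u v & ~~ adj t x y],
      well_covered t [:: x; u; y; v]
    & ((x != r) && ~~ adj t r x) || ((y != r) && ~~ adj t r y)].

Definition violated_cycle (r : V) (t : R) (c : seq V) : Prop :=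
  [/\ is_cycle t c, well_covered t c,
      (exists2 a, a \in c & exists2 b, b \in c & (a != b) && ~~ adj t a b)
    & has_far_vertex r t c].

End Graph.

(* Main.v *)
Require Import Defs.
From HB Require Import structures.
From mathcomp Require Import all_boot all_order all_algebra zify.
From Stdlib Require Import Classical.
Set Implicit Arguments. Unset Strict Implicit. Unset Printing Implicit Defensive.
Import Order.TTheory GRing.Theory Num.Theory.

Lemma mod2 n x : (x < n + n)%N -> x %% n = (if (x < n)%N then x else x - n)%N.
Proof. move=> H; case: (ltnP x n) => h; first by rewrite modn_small. rewrite -{1}(subnK h) modnDr modn_small //; lia. Qed.

Lemma cycle_nthP (T : eqType) (e : rel T) (c : seq T) x0 :
  cycle e c <-> forall k, (k < size c)%N -> e (nth x0 c k) (nth x0 c (k.+1 %% size c)).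
Proof.
case: c => [|x p] //=.
have E : forall k, (k < (size p).+1)%N -> nth x0 (x :: rcons p x) k = nth x0 (x :: p) k.
  move=> [|k] //= Hk; rewrite nth_rcons; case: ltngtP => //; lia.
have F : forall k, (k < (size p).+1)%N -> nth x0 (rcons p x) k = nth x0 (x :: p) (k.+1 %% (size p).+1).
  move=> k Hk; rewrite nth_rcons.
  case: (ltngtP k (size p)) => Hkp.
  - by rewrite modn_small.
  - lia.
  - by rewrite Hkp modnn.
split.
- move/(pathP x0) => H k Hk. rewrite -E // -F //. apply: H. by rewrite size_rcons.
- move=> H; apply/(pathP x0) => k; rewrite size_rcons => Hk.
  rewrite E // F //. exact: H.
Qed.

Section Arc.
Variables (R : realDomainType) (V : finType) (w : V -> V -> R).
Hypothesis wsym : forall x y, w x y = w y x.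

Definition ecyc x0 (c : seq V) (k : nat) :=
  w (nth x0 c (k %% size c)) (nth x0 c (k.+1 %% size c)).

Lemma ecyc_add x0 c a k : ecyc x0 c (a %% size c + k) = ecyc x0 c (a + k).
Proof. by rewrite /ecyc (modnDml a k (size c)) -!addnS (modnDml a k.+1 (size c)). Qed.

Lemma ecyc_addn x0 c k : ecyc x0 c (k + size c) = ecyc x0 c k.
Proof. by rewrite /ecyc modnDr -addSn modnDr. Qed.

Lemma ecyc_mod x0 c k : ecyc x0 c (k %% size c) = ecyc x0 c k.
Proof. by rewrite -[k %% _]addn0 ecyc_add addn0. Qed.

Lemma cedge_ecyc x0 c k : (k < size c)%N -> cedge w x0 c k = ecyc x0 c k.
Proof. by move=> h; rewrite /cedge /ecyc /cv (modn_small h). Qed.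

Definition arcle x0 c a d W := forall k, (k < d)%N -> (ecyc x0 c (a + k) <= W)%R.

Lemma arcle_mod x0 c a d W : arcle x0 c (a %% size c) d W <-> arcle x0 c a d W.
Proof. by split=> H k hk; have := H k hk; rewrite ecyc_add. Qed.

Lemma covers_arc x0 c i j : (i < j)%N -> (j < size c)%N ->
  covers w x0 c i j <->
  (arcle x0 c i (j - i) (w (cv x0 c i) (cv x0 c j)) \/
   arcle x0 c j (size c - (j - i)) (w (cv x0 c i) (cv x0 c j))).
Proof.
move=> hij hjn; set W := w _ _; set n := size c.
have L : (forall k, (i <= k < j)%N -> (cedge w x0 c k <= W)%R) <-> arcle x0 c i (j - i) W.
  split=> H k hk.
  - rewrite -cedge_ecyc; last by rewrite -/n; lia. apply: H; lia.
  - rewrite cedge_ecyc; last by rewrite -/n; lia.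
    have -> : k = (i + (k - i))%N by lia. apply: H; lia.
have Rr : (forall k, (k < size c)%N -> (k < i)%N || (j <= k)%N -> (cedge w x0 c k <= W)%R)
          <-> arcle x0 c j (size c - (j - i)) W.
  split=> H k hk.
  - case: (ltnP (j + k) n) => h.
    + rewrite -cedge_ecyc //. apply: H => //; lia.
    + have -> : (j + k = (j + k - n) + n)%N by lia.
      rewrite ecyc_addn -cedge_ecyc; last by rewrite -/n; lia.
      apply: H; rewrite -/n; lia.
  - move=> h; rewrite cedge_ecyc //.
    case: (leqP j k) => h2.
    + have -> : k = (j + (k - j))%N by lia. apply: H; rewrite -/n in hk *; lia.
    + have -> : k = (j + (k + n - j)) - n by lia.
      rewrite -ecyc_addn. have -> : (j + (k + n - j) - n + size c = j + (k + n - j))%N by rewrite -/n; lia.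
      apply: H; rewrite -/n in hk *; lia.
rewrite /covers -L -Rr; by [].
Qed.

Definition arc x0 (c : seq V) a len := mkseq (fun p => nth x0 c ((a + p) %% size c)) len.

Lemma size_arc x0 c a len : size (arc x0 c a len) = len.
Proof. by rewrite size_mkseq. Qed.

Lemma nth_arc x0 y0 c a len p : (p < len)%N -> nth y0 (arc x0 c a len) p = nth x0 c ((a + p) %% size c).
Proof. by move=> h; rewrite nth_mkseq. Qed.

Lemma mem_arc x0 c a len x : x \in arc x0 c a len <-> exists2 p, (p < len)%N & x = nth x0 c ((a + p) %% size c).
Proof.
split.
- by case/mapP => p; rewrite mem_iota add0n => hp ->; exists p.
- by case=> p hp ->; apply/mapP; exists p; rewrite // mem_iota.
Qed.

Lemma ecyc_arc x0 y0 c a len p : (p.+1 < len)%N -> ecyc y0 (arc x0 c a len) p = ecyc x0 c (a + p).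
Proof.
move=> h; rewrite /ecyc size_arc (@modn_small p len) ?(@modn_small p.+1 len) //; last by lia.
by rewrite !nth_arc ?addnS //; lia.
Qed.

Lemma ecyc_arc_last x0 y0 c a d : ecyc y0 (arc x0 c a d.+1) d =
  w (nth x0 c ((a + d) %% size c)) (nth x0 c (a %% size c)).
Proof. by rewrite /ecyc size_arc modn_small // modnn !nth_arc // addn0. Qed.


Lemma adj_mono t t' x y : (t' <= t)%R -> adj w t' x y -> adj w t x y.
Proof. by rewrite /adj => h /andP [-> h2]; rewrite (le_trans h2 h). Qed.

Lemma adjC t x y : adj w t x y = adj w t y x.
Proof. by rewrite /adj eq_sym wsym. Qed.

Lemma nonconsec_of n P Q : (P < Q)%N -> (Q < n)%N -> (2 <= Q - P)%N -> (Q - P + 2 <= n)%N -> nonconsec n P Q.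
Proof. rewrite /nonconsec; lia. Qed.

Lemma wc_pair t x0 c P Q : well_covered w t c -> (P < Q)%N -> (Q < size c)%N ->
  (2 <= Q - P)%N -> (Q - P + 2 <= size c)%N -> adj w t (nth x0 c P) (nth x0 c Q) ->
  arcle x0 c P (Q - P) (w (nth x0 c P) (nth x0 c Q)) \/
  arcle x0 c Q (size c - (Q - P)) (w (nth x0 c P) (nth x0 c Q)).
Proof.
move=> Hwc h1 h2 h3 h4 hadj.
have := Hwc x0 P Q (nonconsec_of h1 h2 h3 h4) hadj.
by move/(covers_arc x0 h1 h2).
Qed.

Lemma wc_arc t t' x0 c a d :
  (t' <= t)%R -> (a < size c)%N -> (2 <= d)%N -> (d + 2 <= size c)%N ->
  well_covered w t c ->
  (forall i j, nonconsec (size c) i j -> adj w t (cv x0 c i) (cv x0 c j) ->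
      (w (nth x0 c ((a + d) %% size c)) (nth x0 c (a %% size c)) <= w (cv x0 c i) (cv x0 c j))%R) ->
  well_covered w t' (arc x0 c a d.+1).
Proof.
move=> htt ha hd hdn Hwc Hmin y0 p q.
rewrite /nonconsec size_arc => /and4P [hpq hq hq1 hpq0] Hadj.
set n := size c in ha hdn Hmin *.
set s := w _ _ in Hmin.
set P := ((a + p) %% n)%N; set Q := ((a + q) %% n)%N.
have cvp : cv y0 (arc x0 c a d.+1) p = nth x0 c P by rewrite /cv nth_arc //; lia.
have cvq : cv y0 (arc x0 c a d.+1) q = nth x0 c Q by rewrite /cv nth_arc.
have hPv := @mod2 n (a + p) ltac:(lia).
have hQv := @mod2 n (a + q) ltac:(lia).
rewrite -/P in hPv; rewrite -/Q in hQv.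
move: Hadj; rewrite cvp cvq => Hadj.
have Hadjt := adj_mono htt Hadj.
set W := w (nth x0 c P) (nth x0 c Q).
have [key hs] : (arcle x0 c (a + p) (q - p) W \/ arcle x0 c (a + q) (n - (q - p)) W) /\ (s <= W)%R.
  case: (ltnP (a + q) n) => h.
  - have eP : P = (a + p)%N by rewrite hPv ifT //; lia.
    have eQ : Q = (a + q)%N by rewrite hQv ifT.
    have hPQ : (Q - P = q - p)%N by rewrite eP eQ; lia.
    split.
    + have := @wc_pair t x0 c P Q Hwc ltac:(lia) ltac:(lia) ltac:(lia) ltac:(lia) Hadjt.
      rewrite hPQ /P /Q => H; case: H => H; [left|right]; apply/arcle_mod; exact: H.
    + apply: (Hmin P Q) => //; apply: nonconsec_of; lia.
  - case: (ltnP (a + p) n) => h'.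
    + have eP : P = (a + p)%N by rewrite hPv ifT.
      have eQ : Q = (a + q - n)%N by rewrite hQv ifF //; lia.
      have hPQ : (P - Q = n - (q - p))%N by rewrite eP eQ; lia.
      have Hadj' : adj w t (nth x0 c Q) (nth x0 c P) by rewrite adjC.
      split.
      * have := @wc_pair t x0 c Q P Hwc ltac:(lia) ltac:(lia) ltac:(lia) ltac:(lia) Hadj'.
        rewrite hPQ /P /Q /W wsym => H.
        have e : (n - (n - (q - p)) = q - p)%N by lia.
        rewrite e in H; case: H => H; [right|left]; apply/arcle_mod; exact: H.
      * rewrite /W wsym; apply: (Hmin Q P) => //; apply: nonconsec_of; lia.
    + have eP : P = (a + p - n)%N by rewrite hPv ifF //; lia.
      have eQ : Q = (a + q - n)%N by rewrite hQv ifF //; lia.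
      have hPQ : (Q - P = q - p)%N by rewrite eP eQ; lia.
      split.
      * have := @wc_pair t x0 c P Q Hwc ltac:(lia) ltac:(lia) ltac:(lia) ltac:(lia) Hadjt.
        rewrite hPQ /P /Q => H; case: H => H; [left|right]; apply/arcle_mod; exact: H.
      * apply: (Hmin P Q) => //; apply: nonconsec_of; lia.
apply/(covers_arc y0 hpq); first by rewrite size_arc.
rewrite cvp cvq -/W size_arc.
case: key => H; [left|right] => k hk.
- rewrite ecyc_arc; last by lia.
  rewrite addnA; apply: H; lia.
- case: (ltngtP (q + k) d) => h.
  + rewrite ecyc_arc; last by lia.
    rewrite addnA; apply: H; lia.
  + have -> : (q + k = (q + k - d.+1) + size (arc x0 c a d.+1))%N by rewrite size_arc; lia.
    rewrite ecyc_addn ecyc_arc; last by lia.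
    rewrite -ecyc_addn -/n.
    have -> : (a + (q + k - d.+1) + n = a + q + (k + n - d.+1))%N by lia.
    apply: H; lia.
  + by rewrite h ecyc_arc_last.
Qed.


Lemma cycle_edge t x0 c y : cycle (adj w t) c -> (0 < size c)%N ->
  adj w t (nth x0 c (y %% size c)) (nth x0 c (y.+1 %% size c)).
Proof.
move=> /(@cycle_nthP _ _ _ x0) H hn; have := H (y %% size c) (ltn_pmod _ hn).
by rewrite -addn1 (modnDml y 1 (size c)) addn1.
Qed.

Lemma arc_cycle t x0 c a d : uniq c -> (a < size c)%N -> (2 <= d)%N -> (d < size c)%N ->
  (forall k, (k < d)%N -> adj w t (nth x0 c ((a + k) %% size c)) (nth x0 c ((a + k).+1 %% size c))) ->
  adj w t (nth x0 c ((a + d) %% size c)) (nth x0 c (a %% size c)) ->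
  is_cycle w t (arc x0 c a d.+1).
Proof.
move=> hu ha hd hdn He hl; have hn : (0 < size c)%N by lia.
split.
- rewrite /arc /mkseq map_inj_in_uniq ?iota_uniq // => p q; rewrite !mem_iota !add0n => hp hq.
  move/eqP; rewrite nth_uniq ?ltn_pmod //.
  rewrite (@mod2 (size c) (a + p)); last by lia.
  rewrite (@mod2 (size c) (a + q)); last by lia.
  by case: ifP; case: ifP => h1 h2 /eqP; lia.
- by rewrite size_arc.
- apply/(@cycle_nthP _ _ _ x0) => k; rewrite size_arc => hk.
  case: (ltnP k d) => h.
  + rewrite (@modn_small k.+1 d.+1) // !nth_arc //; try lia. rewrite addnS; exact: He.
  + have -> : k = d by lia.
    by rewrite modnn !nth_arc // addn0.
Qed.

Lemma mem_arc_split x0 c i j x : (i < j)%N -> (j < size c)%N -> x \in c ->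
  x \in arc x0 c i (j - i).+1 \/ x \in arc x0 c j (size c - (j - i)).+1.
Proof.
move=> hij hj hx; set n := size c in hj *.
have hk : (index x c < n)%N by rewrite index_mem.
have ex : x = nth x0 c (index x c) by rewrite nth_index.
set k := index x c in hk ex.
case: (leqP i k) => h1; case: (leqP k j) => h2.
- left; apply/mem_arc; exists (k - i); first lia.
  by rewrite modn_small subnKC.
- right; apply/mem_arc; exists (k - j); first lia.
  by rewrite modn_small subnKC //; lia.
- right; apply/mem_arc; exists (n - j + k); first lia.
  by rewrite (_ : (j + (n - j + k) = k + n)%N); [rewrite modnDr modn_small //; lia | lia].
- lia.
Qed.

End Arc.

Lemma nc4 i j : nonconsec 4 i j -> ((i = 0 /\ j = 2) \/ (i = 1 /\ j = 3))%N.
Proof. rewrite /nonconsec; lia. Qed.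

Lemma k03 k : (k < 4)%N -> (k < 1)%N || (3 <= k)%N -> (k = 0 \/ k = 3)%N.
Proof. lia. Qed.

Lemma uniq4 (T : eqType) (a b c d : T) : a != b -> a != c -> a != d -> b != c -> b != d -> c != d ->
  uniq [:: a; b; c; d].
Proof. by move=> h1 h2 h3 h4 h5 h6; rewrite /= !inE !negb_or h1 h2 h3 h4 h5 h6. Qed.

Section Graph2.
Variables (R : realDomainType) (V : finType) (w : V -> V -> R).
Hypothesis wsym : forall x y, w x y = w y x.
Variable r : V.

Definition GoalB := exists t', threshold w t' /\
  ((exists c, bad_hole w r t' c) \/ (exists x u y v, bad_diamond w r t' x u y v)).

Definition farb t z := (z != r) && ~~ adj w t r z.

Lemma hole4 t a b c d : uniq [:: a; b; c; d] ->
  adj w t a b -> adj w t b c -> adj w t c d -> adj w t d a ->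
  ~~ adj w t a c -> ~~ adj w t b d -> has_far_vertex w r t [:: a; b; c; d] ->
  bad_hole w r t [:: a; b; c; d].
Proof.
move=> hu hab hbc hcd hda hac hbd hf; split => //.
- by split => //=; rewrite hab hbc hcd hda.
- move=> x0 i j /nc4.
  by case=> [[-> ->]|[-> ->]]; rewrite /cv /=.
Qed.

Lemma hole_from t p m q : threshold w t -> p != m -> m != q -> p != q ->
  adj w t p m -> adj w t q m -> ~~ adj w t p q -> farb t m -> ~~ farb t p -> ~~ farb t q -> GoalB.
Proof.
move=> ht hpm hmq hpq apm aqm npq fm fp fq.
have nf : forall z, ~~ farb t z -> (z == r) || adj w t r z.
  by move=> z; rewrite /farb negb_and !negbK.
move/nf: fp => fp; move/nf: fq => fq; move: fm; rewrite /farb => /andP [hmr nrm].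
have arp : adj w t r p.
  case/orP: fp => // /eqP ep; move: nrm; by rewrite -ep apm.
have arq : adj w t r q.
  case/orP: fq => // /eqP eq; move: nrm; by rewrite -eq aqm.
exists t; split => //; left; exists [:: r; p; m; q]; apply: hole4 => //.
- rewrite /= !inE !negb_or hpm hpq hmq /= andbT.
  have -> : r != p by move: arp; rewrite /adj => /andP [].
  have -> : r != q by move: arq; rewrite /adj => /andP [].
  by rewrite eq_sym hmr.
- by rewrite (adjC wsym).
- by rewrite (adjC wsym).
- by exists m; rewrite ?inE ?eqxx ?orbT // hmr nrm.
Qed.

Lemma diam t p m1 q m2 : threshold w t -> uniq [:: p; m1; q; m2] ->
  adj w t p m1 -> adj w t p m2 -> adj w t q m1 -> adj w t q m2 -> adj w t m1 m2 -> ~~ adj w t p q ->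
  (w p m1 <= w m1 m2)%R -> (w m2 p <= w m1 m2)%R ->
  [|| farb t p, farb t m1, farb t q | farb t m2] -> GoalB.
Proof.
move=> ht hu a1 a2 a3 a4 a5 na h1 h2 hf.
move: (hu) => /= /andP [H1 /andP [H2 /andP [H3 _]]].
move: H1 H2 H3; rewrite !inE !negb_or => /and3P [hpm1 hpq hpm2] /andP [hm1q hm1m2] hqm2.
case Hpq : (farb t p || farb t q).
- exists t; split => //; right; exists p, m1, q, m2; split => //.
  + by rewrite a1 a2 a3 a4 a5 na.
  + move=> x0 i j /nc4.
    case=> [[-> ->]|[-> ->]]; rewrite /cv /=; first by rewrite (negbTE na).
    move=> _; right => k hk hk'.
    have := k03 hk hk'.
    by case=> ->; rewrite /cedge /cv /=.
- move/negbT: Hpq; rewrite negb_or => /andP [fp fq].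
  case/or4P: hf => hf; first by rewrite hf in fp.
  + by apply: (@hole_from t p m1 q) => //; rewrite eq_sym.
  + by rewrite hf in fq.
  + by apply: (@hole_from t p m2 q) => //; rewrite eq_sym.
Qed.


Definition NA t (c : seq V) := exists2 a, a \in c & exists2 b, b \in c & (a != b) && ~~ adj w t a b.

Lemma nfar_all t c : ~ has_far_vertex w r t c -> forall z, z \in c -> (z == r) || adj w t r z.
Proof.
move=> nF z hz; apply/negPn/negP; rewrite negb_or => hn; apply: nF; exists z => //.
Qed.

Lemma adj_neq t x y : adj w t x y -> x != y.
Proof. by case/andP. Qed.

Lemma adj_le t x y : adj w t x y -> (w x y <= t)%R.
Proof. by case/andP. Qed.

Lemma finish t s C1 C2 c u v : threshold w t -> threshold w s -> (s <= t)%R ->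
  u \in C1 -> v \in C1 -> u \in C2 -> v \in C2 -> adj w t u v -> w u v = s ->
  (forall x, x \in c -> x \in C1 \/ x \in C2) ->
  (NA s C1 -> has_far_vertex w r s C1 -> GoalB) ->
  (NA t C2 -> has_far_vertex w r t C2 -> GoalB) ->
  NA t c -> has_far_vertex w r t c -> GoalB.
Proof.
move=> ht hs hst u1 v1 u2 v2 auv wuv hcov IH1 IH2 [a ha [b hb /andP [hab nab]]] hfc.
case: (classic GoalB) => [//|nG].
have cl1 : has_far_vertex w r s C1 -> forall a b, a \in C1 -> b \in C1 -> a != b -> adj w s a b.
  move=> F a' b' ha' hb' hab'; apply/negPn/negP => hn; apply: nG; apply: IH1 => //.
  by exists a' => //; exists b' => //; rewrite hab' hn.
have cl2 : has_far_vertex w r t C2 -> forall a b, a \in C2 -> b \in C2 -> a != b -> adj w t a b.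
  move=> F a' b' ha' hb' hab'; apply/negPn/negP => hn; apply: nG; apply: IH2 => //.
  by exists a' => //; exists b' => //; rewrite hab' hn.
have huv : u != v := adj_neq auv.
have farst : forall z, farb t z -> farb s z.
  move=> z; rewrite /farb => /andP [-> h] /=; apply/negP => h'; move/negP: h; apply; exact: adj_mono h'.
case: (classic (has_far_vertex w r t C2)) => P; case: (classic (has_far_vertex w r s C1)) => Q.
- (* both cliques *)
  have key : forall a0 b0, a0 \in C1 -> a0 \notin C2 -> b0 \in C2 -> b0 \notin C1 -> ~~ adj w t a0 b0 -> GoalB.
    move=> a0 b0 ha1 ha2 hb2 hb1 nab'.
    have hau : a0 != u by apply: contraNneq ha2 => ->.
    have hav : a0 != v by apply: contraNneq ha2 => ->.
    have hbu : b0 != u by apply: contraNneq hb1 => ->.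
    have hbv : b0 != v by apply: contraNneq hb1 => ->.
    have hab' : a0 != b0 by apply: contraNneq ha2 => ->.
    have sau := cl1 Q a0 u ha1 u1 hau.
    have sav := cl1 Q a0 v ha1 v1 hav.
    have tbu := cl2 P b0 u hb2 u2 hbu.
    have tbv := cl2 P b0 v hb2 v2 hbv.
    have h1 : (w a0 u <= w u v)%R by rewrite wuv; exact: adj_le sau.
    have h2 : (w v a0 <= w u v)%R by rewrite wuv wsym; exact: adj_le sav.
    case Hf : [|| farb t a0, farb t u, farb t b0 | farb t v].
    + apply: (@diam t a0 u b0 v) => //.
      * by apply: uniq4 => //; rewrite eq_sym.
      * exact: adj_mono sau.
      * exact: adj_mono sav.
    + move/negbT: Hf; rewrite !negb_or => /and4P [fa fu fb fv].
      have [y hy2 fy] := P.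
      have hyu : y != u by apply: contraNneq fu => <-.
      have hyv : y != v by apply: contraNneq fv => <-.
      have hyb : y != b0 by apply: contraNneq fb => <-.
      have hya : y != a0 by apply: contraNneq ha2 => <-.
      have tyu := cl2 P y u hy2 u2 hyu.
      have tyv := cl2 P y v hy2 v2 hyv.
      have nry : ~~ adj w t r y by case/andP: fy.
      have nyr : y != r by case/andP: fy.
      case Hay : (adj w t a0 y).
      * have nf : forall z, ~~ farb t z -> (z == r) || adj w t r z.
          by move=> z; rewrite /farb negb_and !negbK.
        have ara : adj w t r a0.
          case/orP: (nf _ fa) => // /eqP e; by move: nry; rewrite -e Hay.
        have arb : adj w t r b0.
          case/orP: (nf _ fb) => // /eqP e; move: nab'; by rewrite e (adjC wsym) ara.
        exists t; split => //; left; exists [:: r; a0; y; b0]; apply: hole4 => //.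
        - apply: uniq4.
          + exact: adj_neq ara.
          + by rewrite eq_sym.
          + exact: adj_neq arb.
          + exact: adj_neq Hay.
          + exact: hab'.
          + exact: hyb.
        - exact: cl2 P y b0 hy2 hb2 hyb.
        - by rewrite (adjC wsym).
        - by exists y; rewrite ?inE ?eqxx ?orbT // nyr nry.
      * apply: (@diam t a0 u y v) => //.
        - by apply: uniq4 => //; rewrite eq_sym.
        - exact: adj_mono sau.
        - exact: adj_mono sav.
        - by rewrite Hay.
        - by rewrite /farb nyr nry !orbT.
  have cl1t : forall a b, a \in C1 -> b \in C1 -> a != b -> adj w t a b.
    by move=> a0 b0 h1 h2 h3; apply: (adj_mono hst); apply: cl1.
  case: (hcov a ha) => ha'; case: (hcov b hb) => hb'.
  + by move: nab; rewrite cl1t.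
  + case: (boolP (a \in C2)) => ha2; first by move: nab; rewrite cl2.
    case: (boolP (b \in C1)) => hb1; first by move: nab; rewrite cl1t.
    exact: (key a b).
  + case: (boolP (b \in C2)) => hb2; first by move: nab; rewrite cl2.
    case: (boolP (a \in C1)) => ha1; first by move: nab; rewrite cl1t.
    by apply: (key b a) => //; rewrite (adjC wsym).
  + by move: nab; rewrite cl2.
- (* C1 has no far vertex at s, C2 clique *)
  have [y hy fy] := P.
  have nry : ~~ adj w t r y by case/andP: fy.
  have nyr : y != r by case/andP: fy.
  have nf1 := nfar_all Q.
  have hy1 : y \notin C1.
    apply/negP => h; move: (nf1 y h); rewrite (negbTE nyr) /= => h'.
    by move: nry; rewrite (adj_mono hst h').
  have hyu : y != u by apply: contraNneq hy1 => ->.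
  have hyv : y != v by apply: contraNneq hy1 => ->.
  have tyu := cl2 P y u hy u2 hyu.
  have tyv := cl2 P y v hy v2 hyv.
  have aru : adj w s r u.
    case/orP: (nf1 u u1) => // /eqP e; move: nry; by rewrite -e (adjC wsym) tyu.
  have arv : adj w s r v.
    case/orP: (nf1 v v1) => // /eqP e; move: nry; by rewrite -e (adjC wsym) tyv.
  apply: (@diam t r u y v) => //.
  + apply: uniq4 => //.
    * exact: adj_neq aru.
    * by rewrite eq_sym.
    * exact: adj_neq arv.
    * by rewrite eq_sym.
  + exact: adj_mono aru.
  + exact: adj_mono arv.
  + by rewrite wuv; exact: adj_le aru.
  + by rewrite wuv wsym; exact: adj_le arv.
  + by rewrite /farb nyr nry !orbT.
- (* C2 has no far vertex, C1 clique *)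
  have [x hx fx] := hfc.
  have nrx : ~~ adj w t r x by case/andP: fx.
  have nxr : x != r by case/andP: fx.
  have nf2 := nfar_all P.
  have hx2 : x \notin C2.
    apply/negP => h; move: (nf2 x h); by rewrite (negbTE nxr) (negbTE nrx).
  have hx1 : x \in C1 by case: (hcov x hx) => // h; rewrite h in hx2.
  have hxu : x != u by apply: contraNneq hx2 => ->.
  have hxv : x != v by apply: contraNneq hx2 => ->.
  have sxu := cl1 Q x u hx1 u1 hxu.
  have sxv := cl1 Q x v hx1 v1 hxv.
  have aru : adj w t r u.
    case/orP: (nf2 u u2) => // /eqP e; move: nrx; by rewrite -e (adjC wsym) (adj_mono hst sxu).
  have arv : adj w t r v.
    case/orP: (nf2 v v2) => // /eqP e; move: nrx; by rewrite -e (adjC wsym) (adj_mono hst sxv).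
  apply: (@diam t x u r v) => //.
  + apply: uniq4 => //.
    * by rewrite eq_sym; exact: adj_neq aru.
    * exact: adj_neq arv.
  + exact: adj_mono sxu.
  + exact: adj_mono sxv.
  + by rewrite (adjC wsym).
  + by rewrite wuv; exact: adj_le sxu.
  + by rewrite wuv wsym; exact: adj_le sxv.
  + by rewrite /farb nxr nrx.
-
  have [x hx fx] := hfc.
  have nrx : ~~ adj w t r x by case/andP: fx.
  have nxr : x != r by case/andP: fx.
  case: (hcov x hx) => h.
  + move: (nfar_all Q h); rewrite (negbTE nxr) /= => h'.
    by move: nrx; rewrite (adj_mono hst h').
  + by move: (nfar_all P h); rewrite (negbTE nxr) (negbTE nrx).
Qed.


Lemma exists_min (I : finType) (P : pred I) (F : I -> R) :
  (exists i, P i) -> exists i, P i /\ forall j, P j -> (F i <= F j)%R.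
Proof.
move=> [i0 Pi0].
suff : forall s : seq I, has P s -> exists i, P i /\ forall j, j \in s -> P j -> (F i <= F j)%R.
  case/(_ (enum I)).
  - by apply/hasP; exists i0; rewrite ?mem_enum.
  - by move=> i [Pi H]; exists i; split => // j; apply: H; rewrite mem_enum.
elim=> [//|x s IHs] /= hP.
case: (boolP (has P s)) => hs.
- have [i [Pi H]] := IHs hs.
  case: (boolP (P x)) => Px.
  + case: (leP (F i) (F x)) => hle.
    * exists i; split => // j; rewrite inE => /orP [/eqP -> //|]; exact: H.
    * exists x; split => // j; rewrite inE => /orP [/eqP -> //|] hj Pj.
      exact: le_trans (ltW hle) (H j hj Pj).
  + exists i; split => // j; rewrite inE => /orP [/eqP -> //|]; last exact: H.
    by rewrite (negbTE Px).
- have Px : P x by move: hP; rewrite (negbTE hs) orbF.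
  exists x; split => // j; rewrite inE => /orP [/eqP -> //|] hj Pj.
  by move/hasPn: hs => /(_ j hj); rewrite Pj.
Qed.


Lemma main_ind n : forall t c, (size c <= n)%N -> threshold w t -> violated_cycle w r t c -> GoalB.
Proof.
elim: n => [|n IH] t c hn ht [[hu hsz hcyc] hwc hna hfar].
  by move: hsz hn; case: (size c) => //.
set n0 := size c in hn hsz.
case: (boolP [exists p : 'I_n0 * 'I_n0, nonconsec n0 p.1 p.2 && adj w t (nth r c p.1) (nth r c p.2)]) => hch; last first.
- (* chordless: a bad hole *)
  exists t; split => //; left; exists c; split => //.
  + case: (leqP 4 n0) => // h3.
    have e3 : n0 = 3 by lia.
    case: hna => a ha [b hb /andP [hab nab]].
    have ea : a = nth r c (index a c) by rewrite nth_index.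
    have eb : b = nth r c (index b c) by rewrite nth_index.
    have hia : (index a c < 3)%N by rewrite -e3 index_mem.
    have hib : (index b c < 3)%N by rewrite -e3 index_mem.
    have hne : index a c != index b c.
      by apply: contraNneq hab => e; rewrite ea eb e.
    have hn0 : (0 < size c)%N by rewrite -/n0 e3.
    have E1 := @cycle_edge _ _ w t r c (index a c) hcyc hn0.
    have E2 := @cycle_edge _ _ w t r c (index b c) hcyc hn0.
    rewrite -/n0 e3 (@modn_small (index a c) 3 hia) in E1.
    rewrite -/n0 e3 (@modn_small (index b c) 3 hib) in E2.
    have : ((index a c).+1 %% 3 = index b c \/ (index b c).+1 %% 3 = index a c)%N.
      move: hia hib hne; case: (index a c) => [|[|[|]]] //; case: (index b c) => [|[|[|]]] //; auto.
    case=> e; [move: E1 | move: E2]; rewrite e -ea -eb; first by rewrite (negbTE nab).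
    by rewrite (adjC wsym) (negbTE nab).
  + move=> x0 i j hij.
    have hi : (i < n0)%N by move: hij; rewrite /nonconsec; lia.
    have hj : (j < n0)%N by move: hij; rewrite /nonconsec; lia.
    move/existsPn: hch => H; have := H (Ordinal hi, Ordinal hj); rewrite /=.
    by rewrite hij /= /cv (set_nth_default r x0 hi) (set_nth_default r x0 hj).
- (* a chord: take one of minimal weight *)
  have [[i' j'] [/andP [hij hadj] Hmin']] := @exists_min _
    (fun p : 'I_n0 * 'I_n0 => nonconsec n0 p.1 p.2 && adj w t (nth r c p.1) (nth r c p.2))
    (fun p => w (nth r c p.1) (nth r c p.2)) (existsP hch).
  move: hij hadj Hmin' => /=.
  set i := nat_of_ord i'; set j := nat_of_ord j' => hij hadj Hmin'.
  set s := w (nth r c i) (nth r c j).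
  have Hmin : forall i1 j1, nonconsec n0 i1 j1 -> adj w t (cv r c i1) (cv r c j1) ->
      (s <= w (cv r c i1) (cv r c j1))%R.
    move=> i1 j1 h1 h2.
    have hi1 : (i1 < n0)%N by move: h1; rewrite /nonconsec; lia.
    have hj1 : (j1 < n0)%N by move: h1; rewrite /nonconsec; lia.
    by apply: (Hmin' (Ordinal hi1, Ordinal hj1)); rewrite /= h1 h2.
  have hij' : [/\ (i < j)%N, (j < n0)%N, (2 <= j - i)%N & (j - i + 2 <= n0)%N].
    by move: hij; rewrite /nonconsec; split; lia.
  case: hij' => hij1 hjn hd1 hd2.
  have hst : (s <= t)%R by exact: adj_le hadj.
  have hs : threshold w s.
    split; first by exists (nth r c i), (nth r c j); split => //; exact: adj_neq hadj.
    case: ht => _ [x [y [hxy hty]]]; exists x, y; split => //; exact: le_lt_trans hst hty.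
  have hn0 : (0 < n0)%N by lia.
  have Harc : forall a d, (a < n0)%N -> (2 <= d)%N -> (d + 2 <= n0)%N ->
      w (nth r c ((a + d) %% n0)) (nth r c (a %% n0)) = s ->
      adj w t (nth r c ((a + d) %% n0)) (nth r c (a %% n0)) ->
      [/\ is_cycle w t (arc r c a d.+1),
          forall t', (t' <= t)%R -> well_covered w t' (arc r c a d.+1)
        & arcle w r c a d s -> is_cycle w s (arc r c a d.+1)].
    move=> a d ha hd hdn hws hadjc.
    have hdc : (d < size c)%N by rewrite -/n0; lia.
    have hac : (a < size c)%N by rewrite -/n0; lia.
    split.
    - apply: (arc_cycle hu hac hd hdc) => //.
      by move=> k _; apply: cycle_edge.
    - move=> t' ht'; have hdd : (d + 2 <= size c)%N by rewrite -/n0; lia.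
      apply: (wc_arc wsym ht' hac hd hdd hwc); rewrite -/n0 hws; exact: Hmin.
    - move=> Hle; apply: (arc_cycle hu hac hd hdc).
      + move=> k hk; have := @cycle_edge _ _ w t r c (a + k) hcyc hn0.
        rewrite /adj => /andP [-> _] /=; exact: Hle.
      + by move: hadjc; rewrite /adj -/n0 hws => /andP [-> _] /=.
  have eI : (i %% n0 = i)%N by rewrite modn_small //; lia.
  have eJ : (j %% n0 = j)%N by rewrite modn_small.
  have eIJ : ((i + (j - i)) %% n0 = j)%N by rewrite subnKC ?modn_small //; lia.
  have eJI : ((j + (n0 - (j - i))) %% n0 = i)%N.
    by rewrite (_ : (j + (n0 - (j - i)) = i + n0)%N) ?modnDr ?modn_small //; lia.
  have [cyI wcI sI] := Harc i (j - i) ltac:(lia) hd1 hd2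
    ltac:(by rewrite eIJ eI wsym) ltac:(by rewrite eIJ eI (adjC wsym)).
  have [cyO wcO sO] := Harc j (n0 - (j - i)) hjn ltac:(lia) ltac:(lia)
    ltac:(by rewrite eJI eJ) ltac:(by rewrite eJI eJ).
  have szI : (size (arc r c i (j - i).+1) <= n)%N by rewrite size_arc; lia.
  have szO : (size (arc r c j (n0 - (j - i)).+1) <= n)%N by rewrite size_arc; lia.
  have uI : nth r c i \in arc r c i (j - i).+1 by apply/mem_arc; exists 0%N; [done | by rewrite -/n0 addn0 eI].
  have vI : nth r c j \in arc r c i (j - i).+1 by apply/mem_arc; exists (j - i)%N; [done | by rewrite -/n0 eIJ].
  have vO : nth r c j \in arc r c j (n0 - (j - i)).+1 by apply/mem_arc; exists 0%N; [done | by rewrite -/n0 addn0 eJ].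
  have uO : nth r c i \in arc r c j (n0 - (j - i)).+1 by apply/mem_arc; exists (n0 - (j - i))%N; [done | by rewrite -/n0 eJI].
  have hcov := fun x hx => @mem_arc_split _ r c i j x hij1 hjn hx.
  have := hwc r i j hij hadj; move/(covers_arc w r hij1 hjn) => [HL|HR].
  + apply: (@finish t s (arc r c i (j - i).+1) (arc r c j (n0 - (j - i)).+1) c
            (nth r c i) (nth r c j)) => //.
    * move=> h1 h2; apply: (IH s (arc r c i (j - i).+1) szI hs); split => //; [exact: sI | exact: wcI].
    * move=> h1 h2; apply: (IH t (arc r c j (n0 - (j - i)).+1) szO ht); split => //; exact: wcO.
  + apply: (@finish t s (arc r c j (n0 - (j - i)).+1) (arc r c i (j - i).+1) c
            (nth r c i) (nth r c j)) => //.
    * by move=> x hx; case: (hcov x hx); [right|left].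
    * move=> h1 h2; apply: (IH s (arc r c j (n0 - (j - i)).+1) szO hs); split => //; [exact: sO | exact: wcO].
    * move=> h1 h2; apply: (IH t (arc r c i (j - i).+1) szI ht); split => //; exact: wcI.
Qed.

End Graph2.

Theorem corollary1 (R : realDomainType) (V : finType) (r : V)
    (w : V -> V -> R) (wsym : forall x y, w x y = w y x) :
  (forall t, threshold w t ->
     (forall c, ~ bad_hole w r t c) /\
     (forall x u y v, ~ bad_diamond w r t x u y v)) <->
  (forall t, threshold w t -> forall c, ~ violated_cycle w r t c).
Proof.
split.
- move=> H t ht c hv.
  have [t' [ht' [[c' hb] | [x [u [y [v hb]]]]]]] := @main_ind R V w wsym r (size c) t c (leqnn _) ht hv.
  + exact: (proj1 (H t' ht') c' hb).
  + exact: (proj2 (H t' ht') x u y v hb).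
- move=> H t ht; split.
  + move=> c [[hu hsz hcy] h4 hnc hfar]; apply: (H t ht c); split => //.
    * move=> x0 i j hij hadj; by rewrite (negbTE (hnc x0 i j hij)) in hadj.
    * have h0 : (0 < size c)%N by move: h4; clear; lia.
      have h2 : (2 < size c)%N by move: h4; clear; lia.
      exists (nth r c 0); first exact: mem_nth.
      exists (nth r c 2); first exact: mem_nth.
      rewrite nth_uniq //.
      have := hnc r 0 2; rewrite /cv => -> //.
      rewrite /nonconsec; move: h4; clear; lia.
  + move=> x u y v [hu hadjs hwc hfar]; apply: (H t ht [:: x; u; y; v]).
    move: (hadjs) => /andP [axu /andP [axv /andP [ayu /andP [ayv /andP [auv naxy]]]]].
    split => //.
    * by split => //=; rewrite axu (adjC wsym t u y) ayu ayv (adjC wsym t v x) axv.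
    * have hxy : x != y by move: hu; rewrite /= !inE !negb_or => /andP [/and3P [_ -> _] _].
      apply: (@ex_intro2 _ _ _ x); first by rewrite inE eqxx.
      apply: (@ex_intro2 _ _ _ y); first by rewrite !inE eqxx !orbT.
      by rewrite naxy hxy.
    * case/orP: hfar => hf; [exists x | exists y]; rewrite ?inE ?eqxx ?orbT //.
Qed.
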